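(* Let $w$ be a word over a finite alphabet $A$, $H$ a graph on $A$ with loops allowed, and $G=G_{w,H}(u_1,\dots,u_n)$. Suppose $G$ is a strong $(\ell,d)$-graph and its sparsification $\phi(G)$ has a connected component $C$ with $|C|\ge(2d'^2\ell^2|H|^2+1)(m-1)+1$, where $d'=\max\{d,2\}$ and $m$ is a positive integer. Then $V(C)$ contains a set of $m$ consecutive integers.
   Context: For positive integers $u_1<\dots<u_n\le|w|$, $G_{w,H}(u_1,\dots,u_n)$ is the graph on $\{u_1,\dots,u_n\}$ in which $u_iu_j$ is an edge iff ($|u_i-u_j|=1$ and $w_{u_i}w_{u_j}\notin E(H)$) or ($|u_i-u_j|>1$ and $w_{u_i}w_{u_j}\in E(H)$) (for equal letters $a$, a loop at $a$); $|H|$ is the number of vertices of $H$. For $U,W\subseteq V(G)$ let $\Delta(U,W)=\max\{|N(u)\cap W|,|N(x)\cap U|:u\in U,x\in W\}$ and $\overline\Delta(U,W)$ the same with $\overline N(v)=V(G)\setminus(N(v)\cup\{v\})$ in place of $N$. A partition $\pi=\{V_1,\dots,V_{\ell'}\}$ of $V(G)$ is an $(\ell,d)$-partition if $\ell'\le\ell$ and for all not necessarily distinct $i,j$, $(V_i,V_j)$ is $d$-sparse ($\Delta(V_i,V_j)\le d$) or $d$-dense ($\overline\Delta(V_i,V_j)\le d$); it is strong if every bag has at least $5\cdot2^\ell d$ vertices; a strong $(\ell,d)$-graph admits one. Its density graph $H(G,\pi)$ has vertices $1,\dots,\ell'$ and an edge (loop when $i=j$) $ij$ iff $(V_i,V_j)$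 is $d$-dense. For a partition $\pi$ and graph $H'$ with loops on $\{1,\dots,\ell'\}$, $\psi(G,\pi,H')$ is obtained from $G$ by replacing the bipartite graph between $V_i$ and $V_j$ by its bipartite complement for each edge $ij$ of $H'$ with $i\neq j$, and replacing $G[V_i]$ by its complement for each loop at $i$. The sparsification is $\phi(G)=\psi(G,\pi,H(G,\pi))$ for any strong $(\ell,d)$-partition $\pi$ (it does not depend on the choice of $\pi$). *)

(* Defs.v *)
From mathcomp Require Import all_boot.
Set Implicit Arguments. Unset Strict Implicit. Unset Printing Implicit Defensive.

(* A graph G is given by a vertex set V : {set T} and an adjacency relation
   e : rel T (only pairs of distinct vertices of V matter). *)
Section GraphDefs.
Variable T : finType.

Definition nbhd (V : {set T}) (e : rel T) (v : T) : {set T} :=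
  [set x in V | e v x].
Definition conbhd (V : {set T}) (e : rel T) (v : T) : {set T} :=
  V :\: (nbhd V e v :|: [set v]).

Definition Delta_with (f : T -> {set T}) (U W : {set T}) : nat :=
  maxn (\max_(u in U) #|f u :&: W|) (\max_(x in W) #|f x :&: U|).

Definition Delta (V : {set T}) (e : rel T) U W := Delta_with (nbhd V e) U W.
Definition Deltabar (V : {set T}) (e : rel T) U W := Delta_with (conbhd V e) U W.

Definition sparse (V : {set T}) (e : rel T) (d : nat) U W := Delta V e U W <= d.
Definition dense (V : {set T}) (e : rel T) (d : nat) U W := Deltabar V e U W <= d.

Definition ld_partition (V : {set T}) (e : rel T) (l d : nat) (P : {set {set T}}) : Prop :=
  [/\ partition P V, #|P| <= l &
      forall B1 B2, B1 \in P -> B2 \in P -> sparse V e d B1 B2 \/ dense V e d B1 B2].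

Definition strong_partition (V : {set T}) (e : rel T) (l d : nat) (P : {set {set T}}) : Prop :=
  ld_partition V e l d P /\ forall B, B \in P -> 5 * 2 ^ l * d <= #|B|.

Definition strong_graph (V : {set T}) (e : rel T) (l d : nat) : Prop :=
  exists P, strong_partition V e l d P.

Definition density_graph (V : {set T}) (e : rel T) (d : nat) (P : {set {set T}}) : rel {set T} :=
  fun B1 B2 => dense V e d B1 B2.

Definition psi (V : {set T}) (e : rel T) (P : {set {set T}}) (H' : rel {set T}) : rel T :=
  fun u v => [&& u \in V, v \in V, u != v &
                 e u v (+) H' (pblock P u) (pblock P v)].

Definition sparsification (V : {set T}) (e : rel T) (d : nat) (P : {set {set T}}) : rel T :=
  psi V e P (density_graph V e d P).

Definition component (r : rel T) (V : {set T}) (x : T) : {set T} :=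
  [set y in V | connect (fun a b => [&& a \in V, b \in V & r a b]) x y].

Definition is_component (r : rel T) (V : {set T}) (C : {set T}) : Prop :=
  exists2 x, x \in V & C = component r V x.

End GraphDefs.

Definition natdist (a b : nat) : nat := (a - b) + (b - a).

(* G_{w,H}: positions of the word w (of length N) are encoded 0-based as
   'I_N (position i : 'I_N stands for the integer i+1); h is the (symmetric,
   loops allowed) edge relation of H on the alphabet A. *)
Definition Gw (A : finType) (N : nat) (w : N.-tuple A) (h : rel A) : rel 'I_N :=
  fun u v => (u != v) &&
    (((natdist u v == 1) && ~~ h (tnth w u) (tnth w v)) ||
     ((1 < natdist u v) && h (tnth w u) (tnth w v))).

(* Main.v *)
Require Import Defs.
From mathcomp Require Import all_boot.
From mathcomp Require Import zify.
Set Implicit Arguments. Unset Strict Implicit. Unset Printing Implicit Defensive.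

Lemma card_vals (N : nat) (S : {set 'I_N}) a k :
  (forall z, z \in S -> a <= z < a + k) -> #|S| <= k.
Proof.
move=> H; rewrite cardE -(size_map val) -(size_iota a k).
apply: uniq_leq_size; first by rewrite map_inj_uniq ?enum_uniq //; exact: val_inj.
by move=> n /mapP [z]; rewrite mem_enum => zS ->; rewrite mem_iota; exact: H.
Qed.

Lemma interval_card (N : nat) (C S : {set 'I_N}) m :
  (forall x z, x \in S -> z \in S -> forall k : 'I_N, x <= k <= z -> k \in C) ->
  (forall a : 'I_N, exists2 k, k < m & forall i : 'I_N, i \in C -> val i != a + k) ->
  #|S| <= m.-1.
Proof.
move=> hS hneg.
case: (set_0Vmem S) => [->|[y yS]]; first by rewrite cards0.
case: (@arg_minnP _ y (fun z => z \in S) (fun z => val z) yS) => a aS amin.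
have [k km Hk] := hneg a.
apply: (@leq_trans k); last by lia.
apply: (card_vals (a := a)) => z zS; rewrite amin //=.
rewrite ltnNge; apply/negP => hz.
have kN : a + k < N by apply: leq_ltn_trans hz _.
have kC : Ordinal kN \in C by apply: (hS a z aS zS); rewrite /= leq_addr hz.
by have := Hk _ kC; rewrite /= eqxx.
Qed.

Lemma card_cover_le (T : finType) (F : {set {set T}}) k :
  (forall B, B \in F -> #|B| <= k) -> #|cover F| <= #|F| * k.
Proof.
move=> H; apply: leq_trans (leq_card_cover F) _.
rewrite -sum_nat_const; exact: leq_sum.
Qed.

Lemma closure_connect (T : finType) (e : rel T) (Q : pred T) x y :
  (forall a b, Q a -> e a b -> Q b) -> Q x -> connect e x y -> Q y.
Proof.
move=> cl Qx /connectP [p]; elim: p x Qx => [|z p IH] x Qx /=; first by move=> _ ->.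
by move=> /andP[exz pz] ey; exact: (IH z (cl _ _ Qx exz) pz ey).
Qed.

Lemma natdistC a b : natdist a b = natdist b a.
Proof. by rewrite /natdist addnC. Qed.

Lemma Gw_long (A : finType) (N : nat) (w : N.-tuple A) (h : rel A) (a b : 'I_N) :
  1 < natdist a b -> Gw w h a b = h (tnth w a) (tnth w b).
Proof.
move=> hd; rewrite /Gw.
have ab : a != b by apply/negP => /eqP ab; move: hd; rewrite ab /natdist; lia.
have -> : (natdist a b == 1) = false by apply/negP => /eqP; lia.
by rewrite ab hd.
Qed.

Lemma natdist_gt1 (N : nat) (a b : 'I_N) : a != b -> natdist a b != 1 -> 1 < natdist a b.
Proof.
move=> /eqP ab /eqP n1; have ne : nat_of_ord a <> nat_of_ord b by move/val_inj.
rewrite /natdist in n1 *; lia.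
Qed.

Lemma near_aux (a b : nat) : a - b + (b - a) <= 1 -> b.-1 <= a < b.-1 + 3.
Proof. lia. Qed.

Lemma step_aux (a b c k : nat) : a - b + (b - a) = 1 -> minn b c <= k <= maxn b c ->
  k <> b -> minn a c <= k <= maxn a c.
Proof. move=> h /andP [h1 h2] h3; apply/andP; split; lia. Qed.

Theorem lemma3p9 (A : finType) (N : nat) (w : N.-tuple A) (h : rel A)
  (U : {set 'I_N}) (l d m : nat) :
  symmetric h -> 0 < m ->
  strong_graph U (Gw w h) l d ->
  forall P : {set {set 'I_N}}, strong_partition U (Gw w h) l d P ->
  forall C : {set 'I_N}, is_component (sparsification U (Gw w h) d P) U C ->
  (2 * (maxn d 2) ^ 2 * l ^ 2 * #|A| ^ 2 + 1) * (m - 1) + 1 <= #|C| ->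
  exists a : nat, forall k, k < m -> exists2 i : 'I_N, i \in C & val i = a + k.
Proof.
move=> hs m0 _ P [[partP cardP pairP] _] C [x0 x0U defC] hC.
set phi := sparsification U (Gw w h) d P.
set r := (fun a b => [&& a \in U, b \in U & phi a b]).
case/and3P: partP => /eqP covP triv _.
have GwC : forall a b, Gw w h a b = Gw w h b a.
  by move=> a b; rewrite /Gw natdistC eq_sym hs.
have denseC : forall B1 B2, dense U (Gw w h) d B1 B2 = dense U (Gw w h) d B2 B1.
  by move=> B1 B2; rewrite /dense /Deltabar /Delta_with maxnC.
have phiC : forall a b, phi a b = phi b a.
  move=> a b; rewrite /phi /sparsification /psi /density_graph GwC denseC eq_sym.
  by case: (a \in U); case: (b \in U).
have rC : symmetric r by move=> a b; rewrite /r phiC andbCA.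
have CU : forall c, c \in C -> c \in U by move=> c; rewrite defC inE => /andP[].
have Cconn : forall c, c \in C -> connect r x0 c by move=> c; rewrite defC inE => /andP[].
have Cstep : forall a b, a \in C -> r a b -> b \in C.
  move=> a b aC rab; rewrite defC inE.
  have := rab; case/and3P => _ -> _ /=.
  exact: connect_trans (Cconn a aC) (connect1 rab).
have Cc : forall c c', c \in C -> c' \in C -> connect r c c'.
  move=> c c' cC c'C; apply: connect_trans (Cconn c' c'C).
  by rewrite (sym_connect_sym rC); exact: Cconn.
have pbU : forall y, y \in U -> pblock P y \in P.
  by move=> y yU; apply: pblock_mem; rewrite covP.
have pbD : forall y B, B \in P -> y \in B -> pblock P y = B.
  by move=> y B BP yB; apply: def_pblock.
have PU : forall B z, B \in P -> z \in B -> z \in U.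
  by move=> B z BP zB; rewrite -covP; apply/bigcupP; exists B.
have deg : forall y B, y \in U -> B \in P -> #|[set z in B | phi y z]| <= d.
  move=> y B yU BP.
  have yB : y \in pblock P y by rewrite mem_pblock covP.
  case dnb: (dense U (Gw w h) d (pblock P y) B).
  - apply: (@leq_trans #|conbhd U (Gw w h) y :&: B|).
      apply: subset_leq_card; apply/subsetP => z; rewrite !inE => /andP[zB].
      rewrite /phi /sparsification /psi /density_graph (pbD z B BP zB) dnb.
      by case/and4P => _ zU yz; rewrite addbT zU zB /= => /negbTE ->; rewrite eq_sym (negbTE yz).
    apply: leq_trans dnb; rewrite /Deltabar /Delta_with.
    apply: leq_trans (leq_maxl _ _).
    exact: (@leq_bigmax_cond _ (fun u => u \in pblock P y) (fun u => #|conbhd U (Gw w h) u :&: B|) y yB).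
  - have : sparse U (Gw w h) d (pblock P y) B.
      by case: (pairP _ _ (pbU y yU) BP) => //; rewrite dnb.
    move=> sp.
    apply: (@leq_trans #|nbhd U (Gw w h) y :&: B|).
      apply: subset_leq_card; apply/subsetP => z; rewrite !inE => /andP[zB].
      rewrite /phi /sparsification /psi /density_graph (pbD z B BP zB) dnb.
      by case/and4P => _ zU yz; rewrite addbF zU zB /= => ->.
    apply: leq_trans sp; rewrite /Delta /Delta_with.
    apply: leq_trans (leq_maxl _ _).
    exact: (@leq_bigmax_cond _ (fun u => u \in pblock P y) (fun u => #|nbhd U (Gw w h) u :&: B|) y yB).
set L := [set a in C | [exists b in C, phi a b && (natdist a b != 1)]].
have phi_long : forall a a' y : 'I_N, a \in U -> a' \in U -> tnth w a = tnth w a' ->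
    pblock P a = pblock P a' -> 1 < natdist a y -> 1 < natdist a' y -> phi a y = phi a' y.
  move=> a a' y aU a'U ew eb d1 d2.
  rewrite /phi /sparsification /psi aU a'U (Gw_long w h d1) (Gw_long w h d2) ew eb.
  have -> : (a != y) = true by apply/negP => /eqP e; move: d1; rewrite e /natdist; lia.
  by have -> : (a' != y) = true by apply/negP => /eqP e; move: d2; rewrite e /natdist; lia.
have Lbound : #|L| <= #|P| * #|A| * (d + 3).
  pose S (p : {set 'I_N} * A) := [set a in L | (a \in p.1) && (tnth w a == p.2)].
  have LS : L \subset cover [set S p | p in setX P [set: A]].
    apply/subsetP => a aL; have aU : a \in U by apply: CU; move: aL; rewrite inE => /andP[].
    apply/bigcupP; exists (S (pblock P a, tnth w a)).
      by apply/imsetP; exists (pblock P a, tnth w a) => //; rewrite inE /= pbU // inE.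
    by rewrite inE aL /= mem_pblock covP aU eqxx.
  apply: leq_trans (subset_leq_card LS) _.
  apply: leq_trans (card_cover_le (k := d+3) _) _; last first.
    by rewrite -(cardsT A) -cardsX; apply: leq_mul => //; apply: leq_imset_card.
  move=> _ /imsetP [[B x] pX ->]; move: pX; rewrite inE /= => /andP [BP _].
  case: (set_0Vmem (S (B, x))) => [->|[v vS]]; first by rewrite cards0.
  move: (vS); rewrite inE /= => /and3P [vL vB /eqP vx].
  move: (vL); rewrite inE => /andP [vC /existsP [y /and3P [yC phvy dvy]]].
  have yU := CU y yC; have vU := CU v vC.
  have dvy1 : 1 < natdist v y.
    apply: natdist_gt1 dvy; move: phvy; rewrite /phi /sparsification /psi.
    by case/and4P.
  apply: (@leq_trans #|[set z in B | phi y z] :|: [set z : 'I_N | natdist z y <= 1]|).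
    apply: subset_leq_card; apply/subsetP => z; rewrite inE /= => /and3P [zL zB /eqP zx].
    rewrite !inE; case: (leqP (natdist z y) 1) => hz; rewrite ?orbT // orbF zB /=.
    have zU : z \in U by apply: PU zB.
    rewrite phiC (phi_long z v y zU vU _ _ hz dvy1) //; first by rewrite zx vx.
    by rewrite (pbD z B _ zB) ?(pbD v B _ vB).
  rewrite cardsU; apply: leq_trans (leq_subr _ _) _; apply: leq_add; first by apply: deg.
  by apply: (card_vals (a := y.-1)) => z; rewrite inE /natdist; exact: near_aux.
case: (boolP [exists a : 'I_N, [forall k : 'I_m, [exists i in C, val i == a + k]]]).
  case/existsP => a /forallP H; exists a => k km.
  by have /existsP [i /andP [iC /eqP ik]] := H (Ordinal km); exists i.
move/existsPn => Hn.
have hneg : forall a : 'I_N, exists2 k, k < m & forall i : 'I_N, i \in C -> val i != a + k.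
  move=> a; have /forallPn [k /existsPn Hk] := Hn a.
  by exists (val k); [exact: ltn_ord | move=> i iC]; have := Hk i; rewrite iC.
pose betw (c y : 'I_N) := [forall k : 'I_N, ((minn c y <= k) && (k <= maxn c y)) ==> (k \in C)].
have betwC : forall c y, betw c y = betw y c by move=> c y; rewrite /betw minnC maxnC.
pose E y := [set c in C | betw c y].
have Ecard : forall y, #|E y| <= m.-1.
  move=> y; apply: interval_card hneg => x z; rewrite !inE => /andP [xC bx] /andP [zC bz] k /andP [xk kz].
  case: (leqP k y) => ky.
    by move/forallP/(_ k)/implyP: bx; apply; apply/andP; split; lia.
  by move/forallP/(_ k)/implyP: bz; apply; apply/andP; split; lia.
have Cpos : 0 < #|C| by apply/card_gt0P; exists x0; rewrite defC inE x0U connect0.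
case: (boolP [forall c in C, [exists y in L, c \in E y]]) => [/forallP allc | /forallPn [c]].
  have CE : C \subset cover [set E y | y in L].
    apply/subsetP => c cC; have /implyP/(_ cC)/existsP [y /andP [yL cEy]] := allc c.
    by apply/bigcupP; exists (E y) => //; apply/imsetP; exists y.
  have hCL : #|C| <= #|L| * m.-1.
    apply: leq_trans (subset_leq_card CE) _; apply: leq_trans (card_cover_le (k := m.-1) _) _.
      by move=> _ /imsetP [y _ ->]; apply: Ecard.
    by apply: leq_mul => //; apply: leq_imset_card.
  have hX : #|L| <= 2 * maxn d 2 ^ 2 * l ^ 2 * #|A| ^ 2.
    apply: leq_trans Lbound _.
    have h1 : d + 3 <= 2 * maxn d 2 ^ 2.
      have := leq_maxl d 2; have := leq_maxr d 2; move: (maxn d 2) => D h2 h3; nia.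
    move: (maxn d 2) h1 => D h1; move: #|A| => a.
    apply: (@leq_trans (l * a * (2 * D ^ 2))); first by apply: leq_mul => //; apply: leq_mul.
    have -> : 2 * D ^ 2 * l ^ 2 * a ^ 2 = (l * a) * (l * a) * (2 * D ^ 2) by nia.
    apply: leq_mul => //; case: (posnP (l * a)) => [-> //| pos]; exact: leq_pmulr.
  have := leq_mul hX (leqnn m.-1); move: hC hCL; move: (2 * maxn d 2 ^ 2 * l ^ 2 * #|A| ^ 2) => X.
  move=> hC hCL hXm; exfalso; nia.
rewrite negb_imply => /andP [cC /existsPn noE].
have Ecc : c \in E c.
  rewrite inE cC /=; apply/forallP => k; apply/implyP => hk.
  suff -> : k = c by [].
  by apply: val_inj; move: hk; rewrite minnn maxnn => hk; apply/eqP; rewrite eqn_leq andbC.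
have sub : C \subset E c.
  apply/subsetP => c' c'C.
  apply: (closure_connect (Q := fun z => z \in E c)) (Cc c c' cC c'C) => //.
  move=> a b; rewrite !inE => /andP [aC bac] rab.
  have bC := Cstep a b aC rab; rewrite bC /=.
  case: (eqVneq (natdist a b) 1) => dab; last first.
    have aL : a \in L.
      rewrite inE aC; apply/existsP; exists b; rewrite bC dab andbT /=.
      by case/and3P: rab.
    have cEa : c \in E a by rewrite inE cC betwC.
    by have := noE a; rewrite aL cEa.
  apply/forallP => k; apply/implyP => hk.
  case: (eqVneq k b) => [-> //| kb].
  move/forallP/(_ k)/implyP: bac; apply.
  have ne : nat_of_ord k <> nat_of_ord b by move=> e; move: kb; rewrite (val_inj e) eqxx.
  by move: dab; rewrite /natdist => dab; exact: step_aux dab hk ne.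
have := leq_trans hC (leq_trans (subset_leq_card sub) (Ecard c)).
move: (2 * maxn d 2 ^ 2 * l ^ 2 * #|A| ^ 2) => X; nia.
Qed.
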